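(* Let $n \ge 1$ and $d \ge 1$, and let $\Omega_1, \dots, \Omega_n \subseteq \mathbb{R}^d$ be nonempty, compact, convex sets. Let $r^*$ be the smallest radius of a closed Euclidean ball intersecting every $\Omega_i$, i.e. $r^* = \min_{\mathbf{x} \in \mathbb{R}^d} \max_{i \in [n]} \operatorname{dist}(\mathbf{x}, \Omega_i)$. Consider the zero-sum game \[ \min_{(\mathbf{x}, \mathbf{v}_1, \dots, \mathbf{v}_n) \in \mathcal{X} \times \mathcal{V}} \ \max_{\mathbf{y} \in \mathcal{Y}} \ f\big((\mathbf{x}, \mathbf{v}_1,\dots,\mathbf{v}_n), \mathbf{y}\big), \qquad f\big((\mathbf{x}, \mathbf{v}_1,\dots,\mathbf{v}_n), \mathbf{y}\big) := \sum_{i=1}^n \begin{pmatrix} \mathbf{x} - \mathbf{v}_i \\ 0 \end{pmatrix}^{\!\top} \begin{pmatrix} \mathbf{y}_i \\ s_i \end{pmatrix} = \sum_{i=1}^n (\mathbf{x} - \mathbf{v}_i)^\top \mathbf{y}_i, \] where $\mathbf{y} = ((\mathbf{y}_1, s_1), \dots, (\mathbf{y}_n, s_n))$. Then a Nash equilibrium $(\mathbf{x}^*, \mathbf{v}_1^*, \dots, \mathbf{v}_n^*, \mathbf{y}^* )$ of this game exists, and the value of the game is $r^*$. Moreover, for such a Nash equilibrium, the closed ball $B(\mathbf{x}^*, r^* )$ intersects every $\Omega_i$, and $\mathbf{v}_i^* \in B(\mathbf{x}^*, r^* ) \cap \Omega_i$ for every $i \in [n]$.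
   Context: $\|\cdot\|$ is the Euclidean norm, $B(\mathbf{x}, r)$ is the closed Euclidean ball of center $\mathbf{x}$ and radius $r$, and $[n] = \{1,\dots,n\}$. $\mathcal{X}$ is the convex hull of $\Omega_1 \cup \dots \cup \Omega_n$; $\mathcal{V} := \Omega_1 \times \dots \times \Omega_n$; and \[ \mathcal{Y} := \Big\{ ((\mathbf{y}_1, s_1), \dots, (\mathbf{y}_n, s_n)) \in (\mathbb{R}^{d} \times \mathbb{R})^n : \|\mathbf{y}_i\| \le s_i \ \forall i \in [n], \ \sum_{i=1}^n s_i = 1 \Big\}. \] For a zero-sum game $\min_{\mathbf{p} \in \mathcal{P}} \max_{\mathbf{q} \in \mathcal{Q}} f(\mathbf{p}, \mathbf{q})$, a pair $(\mathbf{p}^*, \mathbf{q}^* ) \in \mathcal{P}\times\mathcal{Q}$ is a Nash equilibrium iff $f(\mathbf{p}^*, \mathbf{q}^* ) \le f(\mathbf{p}, \mathbf{q}^* )$ for all $\mathbf{p} \in \mathcal{P}$ and $f(\mathbf{p}^*, \mathbf{q}^* ) \ge f(\mathbf{p}^*, \mathbf{q})$ for all $\mathbf{q} \in \mathcal{Q}$; the value of the game is then $f(\mathbf{p}^*, \mathbf{q}^* )$. *)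

(* Defs.v *)
From HB Require Import structures.
From mathcomp Require Import all_boot all_order all_algebra.
From mathcomp Require Import all_classical all_reals all_analysis.
Set Implicit Arguments. Unset Strict Implicit. Unset Printing Implicit Defensive.
Import Order.TTheory GRing.Theory Num.Theory.
Import numFieldNormedType.Exports.
Local Open Scope classical_set_scope.
Local Open Scope ring_scope.

Section Defs.
Variables (R : realType) (d : nat).
Notation V := 'rV[R]_d.

Definition dotv (x y : V) : R := \sum_(j < d) x ord0 j * y ord0 j.
Definition enorm (x : V) : R := Num.sqrt (\sum_(j < d) (x ord0 j) ^+ 2).

Definition cball (x : V) (r : R) : set V := [set z | enorm (z - x) <= r].

Definition conv_hull (A : set V) : set V :=
  [set x | forall C : set V, convex.convex_set (C : set (convex_lmodType V)) -> A `<=` C -> C x].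

Definition dist (x : V) (A : set V) : R := inf [set enorm (x - v) | v in A].
End Defs.

Definition rstar (R : realType) (d n : nat) (Omega : 'I_n -> set 'rV[R]_d) : R :=
  inf [set \big[Num.max/0]_(i < n) dist x (Omega i) | x in [set: 'rV[R]_d]].

Definition gameX (R : realType) (d n : nat) (Omega : 'I_n -> set 'rV[R]_d) :=
  conv_hull (\bigcup_(i in [set: 'I_n]) Omega i).
Definition gameV (R : realType) (d n : nat) (Omega : 'I_n -> set 'rV[R]_d)
  : set ('I_n -> 'rV[R]_d) := [set v | forall i, Omega i (v i)].
Definition gameY (R : realType) (d n : nat)
  : set (('I_n -> 'rV[R]_d) * ('I_n -> R)) :=
  [set ys | (forall i, enorm (ys.1 i) <= ys.2 i) /\ \sum_(i < n) ys.2 i = 1].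

(* minimizing player: p = (x, (v_1..v_n)); maximizing player q = ((y_i), (s_i)) *)
Definition payoff (R : realType) (d n : nat)
  (p : 'rV[R]_d * ('I_n -> 'rV[R]_d)) (q : ('I_n -> 'rV[R]_d) * ('I_n -> R)) : R :=
  \sum_(i < n) dotv (p.1 - p.2 i) (q.1 i).

Definition nash_eq (R : realType) (P Q : Type) (SP : set P) (SQ : set Q)
  (f : P -> Q -> R) (p : P) (q : Q) : Prop :=
  [/\ SP p, SQ q, (forall p', SP p' -> f p q <= f p' q)
    & (forall q', SQ q' -> f p q' <= f p q)].

(* Main.v *)
Require Import Defs.
From HB Require Import structures.
From mathcomp Require Import all_boot all_order all_algebra.
From mathcomp Require Import all_classical all_reals all_analysis.
From mathcomp Require Import ring lra.
Import Order.TTheory GRing.Theory Num.Theory.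
Import numFieldNormedType.Exports.
Local Open Scope classical_set_scope.
Local Open Scope ring_scope.
Set Implicit Arguments. Unset Strict Implicit. Unset Printing Implicit Defensive.



Section Alg.
Variables (R : realType) (d : nat).
Implicit Types x y z : 'rV[R]_d.

Lemma dotvC x y : dotv x y = dotv y x.
Proof. by apply: eq_bigr => j _; rewrite mulrC. Qed.

Lemma dotvDl x y z : dotv (x + y) z = dotv x z + dotv y z.
Proof. by rewrite /dotv -big_split; apply: eq_bigr => j _; rewrite mxE mulrDl. Qed.

Lemma dotvNl x z : dotv (- x) z = - dotv x z.
Proof. by rewrite /dotv -sumrN; apply: eq_bigr => j _; rewrite mxE mulNr. Qed.

Lemma dotvBl x y z : dotv (x - y) z = dotv x z - dotv y z.
Proof. by rewrite dotvDl dotvNl. Qed.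

Lemma dotvZl (c : R) x z : dotv (c *: x) z = c * dotv x z.
Proof. by rewrite /dotv mulr_sumr; apply: eq_bigr => j _; rewrite mxE mulrA. Qed.

Lemma dotvDr x y z : dotv z (x + y) = dotv z x + dotv z y.
Proof. by rewrite !(dotvC z) dotvDl. Qed.
Lemma dotvBr x y z : dotv z (x - y) = dotv z x - dotv z y.
Proof. by rewrite !(dotvC z) dotvBl. Qed.
Lemma dotvZr (c : R) x z : dotv z (c *: x) = c * dotv z x.
Proof. by rewrite !(dotvC z) dotvZl. Qed.
Lemma dotv0l z : dotv 0 z = 0.
Proof. by rewrite /dotv big1 // => j _; rewrite mxE mul0r. Qed.
Lemma dotv0r z : dotv z 0 = 0.
Proof. by rewrite dotvC dotv0l. Qed.

Lemma dotv_suml (I : finType) (F : I -> 'rV[R]_d) z :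
  dotv (\sum_i F i) z = \sum_i dotv (F i) z.
Proof.
rewrite /dotv exchange_big /=; apply: eq_bigr => j _.
by rewrite summxE mulr_suml.
Qed.
Lemma dotv_sumr (I : finType) (F : I -> 'rV[R]_d) z :
  dotv z (\sum_i F i) = \sum_i dotv z (F i).
Proof. by rewrite dotvC dotv_suml; apply: eq_bigr => i _; rewrite dotvC. Qed.

Lemma dotvv_ge0 x : 0 <= dotv x x.
Proof. by apply: sumr_ge0 => j _; rewrite -expr2 sqr_ge0. Qed.

Lemma enorm_ge0 x : 0 <= enorm x.
Proof. exact: sqrtr_ge0. Qed.

Lemma enorm_sq x : enorm x ^+ 2 = dotv x x.
Proof.
rewrite /enorm sqr_sqrtr; last by apply: sumr_ge0 => j _; rewrite sqr_ge0.
by apply: eq_bigr => j _; rewrite expr2.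
Qed.

Lemma enorm_sqE x : enorm x = Num.sqrt (dotv x x).
Proof. by rewrite -enorm_sq sqrtr_sqr ger0_norm ?enorm_ge0. Qed.

Lemma dotvv0 x : dotv x x = 0 -> x = 0.
Proof.
move=> H; apply/rowP => j; rewrite mxE.
have /psumr_eq0P H2 : \sum_(j < d) x ord0 j * x ord0 j = 0 by [].
have := H2 (fun i _ => ltac:(rewrite -expr2; exact: sqr_ge0)) j isT.
by move/eqP; rewrite mulf_eq0 orbb => /eqP.
Qed.

Lemma CS x y : dotv x y <= enorm x * enorm y.
Proof.
have [x0|xn0] := eqVneq (dotv x x) 0.
  by rewrite (dotvv0 x0) dotv0l mulr_ge0 ?enorm_ge0.
have xp : 0 < dotv x x by rewrite lt_def xn0 dotvv_ge0.
have [dneg|dpos] := leP (dotv x y) 0.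
  by apply: le_trans dneg _; rewrite mulr_ge0 ?enorm_ge0.
rewrite -(@ler_pXn2r _ 2) // ?nnegrE ?mulr_ge0 ?enorm_ge0 ?(ltW dpos) //.
rewrite exprMn !enorm_sq.
pose t := dotv x y / dotv x x.
have := dotvv_ge0 (y - t *: x).
rewrite dotvBl !dotvBr !dotvZl !dotvZr (dotvC y x).
have Ht : t * dotv x x = dotv x y by rewrite /t mulfVK // gt_eqF.
rewrite Ht => H.
have : 0 <= (dotv y y - t * dotv x y) * dotv x x.
  by rewrite mulr_ge0 // ?(ltW xp) //; lra.
have -> : (dotv y y - t * dotv x y) * dotv x x = dotv y y * dotv x x - dotv x y ^+ 2.
  by rewrite mulrBl mulrAC Ht expr2.
lra.
Qed.

Lemma enormZ (c : R) x : enorm (c *: x) = `|c| * enorm x.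
Proof.
by rewrite !enorm_sqE dotvZl dotvZr mulrA -expr2 sqrtrM ?sqr_ge0 // sqrtr_sqr.
Qed.

Lemma enormN x : enorm (- x) = enorm x.
Proof. by rewrite -scaleN1r enormZ normrN normr1 mul1r. Qed.

Lemma enormB x y : enorm (x - y) = enorm (y - x).
Proof. by rewrite -enormN opprB. Qed.

Lemma enormD x y : enorm (x + y) <= enorm x + enorm y.
Proof.
rewrite -(@ler_pXn2r _ 2) // ?nnegrE ?addr_ge0 ?enorm_ge0 //.
rewrite sqrrD !enorm_sq dotvDl !dotvDr (dotvC y x).
have := CS x y; lra.
Qed.

Lemma enorm_coord x j : `|x ord0 j| <= enorm x.
Proof.
rewrite -(@ler_pXn2r _ 2) // ?nnegrE ?enorm_ge0 //.
rewrite enorm_sq real_normK ?num_real // /dotv (bigD1 j) //= -expr2 lerDl.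
by apply: sumr_ge0 => i _; rewrite -expr2 sqr_ge0.
Qed.

Lemma enorm_le_sum x : enorm x <= \sum_j `|x ord0 j|.
Proof.
rewrite -(@ler_pXn2r _ 2) // ?nnegrE ?enorm_ge0 ?sumr_ge0 //.
rewrite enorm_sq /dotv expr2 mulr_suml; apply: ler_sum => i _.
rewrite mulr_sumr (bigD1 i) //= -normrM -[X in X <= _]addr0 lerD //.
  by rewrite ler_norm.
by apply: sumr_ge0 => k _; rewrite mulr_ge0.
Qed.

End Alg.



Section Top.
Variable (R : realType).

Lemma coord_le_norm m (x : 'rV[R]_m) j : `|x ord0 j| <= `|x|.
Proof.
have -> : `|x| = mx_norm x by [].
rewrite mx_normrE.
exact: (le_bigmax _ _ (ord0, j)).
Qed.

Lemma lip_cont m (f : 'rV[R]_m -> R) (C : R) :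
  (forall x y, `|f y - f x| <= C * \sum_j `|y ord0 j - x ord0 j|) -> continuous f.
Proof.
move=> H x; apply: (proj2 (@cvgrPdist_le _ _ _ (nbhs x) _ f (f x))) => e e0.
pose del := e / (`|C| * m%:R + 1).
have del0 : 0 < del by rewrite divr_gt0 // ltr_pwDr // mulr_ge0.
near=> t.
have ht : `|x - t| < del.
  near: t. exact: (@cvgr_dist_lt _ _ _ (nbhs x) _ id x (@cvg_id _ _) del del0).
rewrite distrC; apply: le_trans (H x t) _.
apply: le_trans (_ : `|C| * (m%:R * del) <= e).
  apply: le_trans (ler_norm _) _; rewrite normrM ler_wpM2l //.
  rewrite ger0_norm ?sumr_ge0 //.
  apply: le_trans (_ : \sum_(j < m) del <= _); last by rewrite sumr_const card_ord mulr_natl.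
  apply: ler_sum => j _; apply: ltW; apply: le_lt_trans ht.
  have := coord_le_norm (t - x) j; rewrite !mxE => /le_trans; apply.
  by rewrite distrC.
have K0 : 0 <= `|C| * m%:R by rewrite mulr_ge0.
rewrite mulrA /del mulrCA ler_piMr ?(ltW e0) //.
by rewrite ler_pdivrMr ?mul1r ?lerDl // ltr_pwDr.
Unshelve. all: by end_near.
Qed.


Lemma argmin m (K : set 'rV[R]_m) (f : 'rV[R]_m -> R) (C : R) :
  K !=set0 -> compact K ->
  (forall x y, `|f y - f x| <= C * \sum_j `|y ord0 j - x ord0 j|) ->
  exists2 c, K c & forall t, K t -> f c <= f t.
Proof.
move=> K0 cK H.
have cf : {within K, continuous f}.
  by apply: continuous_subspaceT; exact: lip_cont H.
have [c cK' Hc] := EVT_min_rV K0 cK cf.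
exists c; first by rewrite inE in cK'.
by move=> t Kt; apply: Hc; rewrite inE.
Qed.

Lemma box_compact m (a b : 'I_m -> R) :
  compact [set v : 'rV[R]_m | forall i, `[a i, b i]%classic (v ord0 i)].
Proof.
by apply: (rV_compact (A := fun i => `[a i, b i]%classic)) => i; exact: segment_compact.
Qed.

Lemma abs_le_both (a b c : R) : a <= b + c -> b <= a + c -> `|a - b| <= c.
Proof. by move=> h1 h2; rewrite ler_norml; apply/andP; split; lra. Qed.

End Top.



Section Dist.
Variables (R : realType) (d : nat).
Implicit Types x y z v w : 'rV[R]_d.
Implicit Types A : set 'rV[R]_d.

Lemma enorm_lip x y : enorm y <= enorm x + enorm (y - x).
Proof. by have := enormD x (y - x); rewrite addrC subrK. Qed.

Lemma enorm_lip2 x y : `|enorm y - enorm x| <= \sum_j `|y ord0 j - x ord0 j|.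
Proof.
apply: le_trans (_ : enorm (y - x) <= _); last first.
  by apply: le_trans (enorm_le_sum _) _; apply: ler_sum => j _; rewrite !mxE.
by apply: abs_le_both; [exact: enorm_lip | rewrite enormB; exact: enorm_lip].
Qed.

Lemma dist_lb x A : has_lbound [set enorm (x - v) | v in A].
Proof. by exists 0 => _ [v _ <-]; exact: enorm_ge0. Qed.

Lemma dist_le x A v : A v -> dist x A <= enorm (x - v).
Proof. by move=> Av; apply: (ge_inf (dist_lb x A)); exists v. Qed.

Lemma dist_ge0 x A : A !=set0 -> 0 <= dist x A.
Proof.
move=> [v Av]; apply: lb_le_inf; first by exists (enorm (x - v)), v.
by move=> _ [w _ <-]; exact: enorm_ge0.
Qed.

Lemma dist_glb x A r : A !=set0 -> (forall v, A v -> r <= enorm (x - v)) -> r <= dist x A.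
Proof.
move=> [v Av] H; apply: lb_le_inf; first by exists (enorm (x - v)), v.
by move=> _ [w Aw <-]; exact: H.
Qed.

Lemma dist_lip x y A : A !=set0 -> dist y A <= dist x A + enorm (y - x).
Proof.
move=> A0; rewrite -lerBlDr; apply: dist_glb => // v Av.
rewrite lerBlDr; apply: le_trans (dist_le y Av) _.
by have := enormD (y - x) (x - v); rewrite addrA subrK => h; lra.
Qed.

Lemma dist_lip2 x y A : A !=set0 -> `|dist y A - dist x A| <= \sum_j `|y ord0 j - x ord0 j|.
Proof.
move=> A0; apply: le_trans (_ : enorm (y - x) <= _); last first.
  by apply: le_trans (enorm_le_sum _) _; apply: ler_sum => j _; rewrite !mxE.
by apply: abs_le_both; [exact: dist_lip | rewrite enormB; exact: dist_lip].
Qed.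

Lemma proj_ex x A : A !=set0 -> compact A ->
  exists2 v, A v & forall w, A w -> enorm (x - v) <= enorm (x - w).
Proof.
move=> A0 cA.
have H : forall a b, `|enorm (x - b) - enorm (x - a)| <= 1 * \sum_j `|b ord0 j - a ord0 j|.
  move=> a b; rewrite mul1r; apply: le_trans (enorm_lip2 _ _) _.
  apply: ler_sum => j _; rewrite !mxE.
  have -> : x ord0 j - b ord0 j - (x ord0 j - a ord0 j) = - (b ord0 j - a ord0 j).
    by ring.
  by rewrite normrN.
have [v Av Hv] := @argmin R d A (fun v => enorm (x - v)) 1 A0 cA H.
by exists v.
Qed.

Lemma proj_dist x A v : A v -> (forall w, A w -> enorm (x - v) <= enorm (x - w)) ->
  dist x A = enorm (x - v).
Proof.
move=> Av H; apply/eqP; rewrite eq_le dist_le //=.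
by apply: dist_glb => //; exists v.
Qed.

End Dist.



Section Conv.
Variables (R : realType) (d : nat).

Lemma conv_comb (C : set 'rV[R]_d) :
  convex.convex_set (C : set (convex_lmodType 'rV[R]_d)) ->
  forall n (lam : 'I_n -> R) (p : 'I_n -> 'rV[R]_d),
  (forall i, 0 <= lam i) -> \sum_i lam i = 1 -> (forall i, C (p i)) ->
  C (\sum_i lam i *: p i).
Proof.
move=> cC; elim=> [|n IH] lam p l0 l1 pC.
  by move: l1; rewrite big_ord0 => /eqP; rewrite eq_sym oner_eq0.
rewrite big_ord_recl; move: l1; rewrite big_ord_recl => l1.
set s := \sum_(i < n) lam (lift ord0 i) in l1 *.
have s0 : 0 <= s by apply: sumr_ge0.
have [se|sn] := eqVneq s 0.
  have H := se; move: H; rewrite /s => /(psumr_eq0P (fun j _ => l0 _)) H.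
  rewrite big1 ?addr0; last by move=> i _; rewrite H // scale0r.
  have -> : lam ord0 = 1 by rewrite -l1 se addr0.
  by rewrite scale1r.
have sp : 0 < s by rewrite lt_def sn.
have Cq : C (\sum_(i < n) (lam (lift ord0 i) / s) *: p (lift ord0 i)).
  apply: IH => //.
    by move=> i; rewrite divr_ge0.
  by rewrite -mulr_suml mulfV.
have l01 : 0 <= lam ord0 <= 1 by rewrite l0 /=; lra.
move/andP: l01 => [la lb].
have := cC (p ord0) _ (Itv01 la lb) (mem_set (pC ord0)) (mem_set Cq).
rewrite !inE.
set Q := \sum_(i < n) _ *: _.
have -> : conv (Itv01 la lb) (p ord0 : convex_lmodType _) Q = lam ord0 *: p ord0 + (1 - lam ord0) *: Q by [].
have -> : 1 - lam ord0 = s by lra.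
rewrite /Q scaler_sumr; congr (C (_ + _)); apply: eq_bigr => i _.
by rewrite scalerA mulrCA mulfV // mulr1.
Qed.
End Conv.



Section Aux.
Variables (R : realType) (d : nat).
Implicit Types x y z v w : 'rV[R]_d.

Lemma small_t (a b : R) : 0 <= b ->
  (forall t, 0 < t -> t <= 1 -> 0 <= t * a + t ^+ 2 * b) -> 0 <= a.
Proof.
move=> b0 H; rewrite leNgt; apply/negP => a0.
have D0 : 0 < - a + b + 1 by lra.
pose t := - a / (- a + b + 1).
have t0 : 0 < t by rewrite divr_gt0 // oppr_gt0.
have t1 : t <= 1 by rewrite ler_pdivrMr // mul1r; lra.
have := H t t0 t1.
have -> : t * a + t ^+ 2 * b = - (a ^+ 2 * (1 - a)) / (- a + b + 1) ^+ 2.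
  by rewrite /t; field; rewrite gt_eqF.
rewrite pmulr_lge0 ?invr_gt0 ?exprn_gt0 // oppr_ge0 => h.
have : 0 < a ^+ 2 * (1 - a) by apply: mulr_gt0; [rewrite expr2; nra | lra].
lra.
Qed.

Lemma sq_le (a b : R) : 0 <= a -> 0 <= b -> a ^+ 2 <= b ^+ 2 -> a <= b.
Proof. by move=> a0 b0; rewrite (@ler_pXn2r _ 2) ?nnegrE. Qed.

Lemma sq_lt (a b : R) : 0 <= a -> 0 <= b -> a ^+ 2 < b ^+ 2 -> a < b.
Proof. by move=> a0 b0; rewrite (@ltr_pXn2r _ 2) ?nnegrE. Qed.

Lemma le_sq (a b : R) : 0 <= a -> a <= b -> a ^+ 2 <= b ^+ 2.
Proof. by move=> a0 ab; rewrite (@ler_pXn2r _ 2) ?nnegrE //; lra. Qed.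

Lemma enorm0 : enorm (0 : 'rV[R]_d) = 0.
Proof. by rewrite enorm_sqE dotv0l sqrtr0. Qed.

Lemma enorm_sum (I : finType) (F : I -> 'rV[R]_d) :
  enorm (\sum_i F i) <= \sum_i enorm (F i).
Proof.
elim/big_rec2: _ => [|i a b _ H]; first by rewrite enorm0.
by apply: le_trans (enormD _ _) _; rewrite lerD2l.
Qed.

Lemma expand_sq x y (t : R) :
  enorm (x + t *: y) ^+ 2 = dotv x x + 2 * t * dotv x y + t ^+ 2 * dotv y y.
Proof.
rewrite enorm_sq dotvDl !dotvDr !dotvZl !dotvZr (dotvC y x); ring.
Qed.

Lemma proj_vi (A : set 'rV[R]_d) x v w :
  convex.convex_set (A : set (convex_lmodType 'rV[R]_d)) ->
  A v -> A w -> (forall w', A w' -> enorm (x - v) <= enorm (x - w')) ->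
  dotv (x - v) (w - v) <= 0.
Proof.
move=> cA Av Aw H.
suff : 0 <= - 2 * dotv (x - v) (w - v) by lra.
apply: (small_t (dotvv_ge0 (w - v))) => t t0 t1.
have Amem : A (t *: w + (1 - t) *: v).
  have t0' : 0 <= t by lra.
  have := cA w v (Itv01 t0' t1) (mem_set Aw) (mem_set Av).
  by rewrite inE.
have := H _ Amem.
have -> : x - (t *: w + (1 - t) *: v) = (x - v) + (- t) *: (w - v).
  by apply/rowP => j; rewrite !mxE; ring.
move=> h.
have := le_sq (enorm_ge0 _) h; rewrite expand_sq enorm_sq.
have -> : (- t) ^+ 2 = t ^+ 2 by rewrite sqrrN.
lra.
Qed.

End Aux.



Lemma min_center (R : realType) (d n : nat) (Omega : 'I_n -> set 'rV[R]_d) :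
  (1 <= n)%N -> (forall i, Omega i !=set0) -> (forall i, compact (Omega i)) ->
  exists c : 'rV[R]_d, rstar Omega = \big[Num.max/0]_(i < n) dist c (Omega i) /\
     forall x, \big[Num.max/0]_(i < n) dist c (Omega i) <= \big[Num.max/0]_(i < n) dist x (Omega i).
Proof.
move=> hn ne cpt.
pose i0 : 'I_n := Ordinal hn.
pose h := fun x => \big[Num.max/0]_(i < n) dist x (Omega i).
have h_ge : forall x i, dist x (Omega i) <= h x.
  by move=> x i; exact: le_bigmax.
have h_ge0 : forall x, 0 <= h x.
  by move=> x; apply: le_trans (h_ge x i0); exact: dist_ge0.
have h_lip : forall x y, `|h y - h x| <= 1 * \sum_j `|y ord0 j - x ord0 j|.
  move=> x y; rewrite mul1r.
  set S := \sum_j _.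
  have S0 : 0 <= S by apply: sumr_ge0.
  have key : forall a b, h b <= h a + \sum_j `|b ord0 j - a ord0 j|.
    move=> a b; apply: bigmax_le; first by apply: addr_ge0 => //; apply: sumr_ge0.
    move=> i _; have := dist_lip2 a b (ne i); rewrite ler_norml => /andP[_ h1].
    have := h_ge a i; lra.
  apply: abs_le_both; first exact: key.
  have -> : S = \sum_j `|x ord0 j - y ord0 j| by apply: eq_bigr => j _; rewrite distrC.
  exact: key.
have [M0 [_ HM]] := compact_bounded (cpt i0).
have HM' : forall v, Omega i0 v -> `|v| <= M0 + 1.
  by move=> v Hv; apply: (HM (M0 + 1)) => //; lra.
pose Mb := d%:R * (M0 + 1).
have HMb : forall v, Omega i0 v -> enorm v <= Mb.
  move=> v Hv; apply: le_trans (enorm_le_sum v) _.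
  apply: le_trans (_ : \sum_(j < d) (M0 + 1) <= _); last by rewrite sumr_const card_ord /Mb mulr_natl.
  by apply: ler_sum => j _; apply: le_trans (coord_le_norm _ _) (HM' _ Hv).
have Mb0 : 0 <= Mb by have [v0 Hv0] := ne i0; apply: le_trans (HMb _ Hv0); exact: enorm_ge0.
pose Bx := Mb + h 0 + 1.
have Bx0 : 0 < Bx by have := h_ge0 0; rewrite /Bx; lra.
pose K := [set v : 'rV[R]_d | forall j, `[(fun _ => - Bx) j, (fun _ => Bx) j]%classic (v ord0 j)].
have K0 : K 0 by move=> j /=; rewrite mxE in_itv /=; apply/andP; split; lra.
have [c Kc Hc] := @argmin R d K h 1 (ex_intro _ 0 K0) (@box_compact R d (fun _ => - Bx) (fun _ => Bx)) h_lip.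
have hmin : forall x, h c <= h x.
  move=> x; have [Kx|nKx] := pselect (K x); first exact: Hc.
  have [j nj] : exists j, ~ (`[- Bx, Bx]%classic (x ord0 j)).
    by apply/existsNP => H; apply: nKx => j; exact: H.
  have bigj : Bx < `|x ord0 j|.
    move: nj => /= /negP; rewrite in_itv /= negb_and -!ltNge => /orP[h1|h1].
      by rewrite ltr0_norm; lra.
    by rewrite ger0_norm; lra.
  have ex : Bx < enorm x by apply: lt_le_trans bigj (enorm_coord _ _).
  have dx : enorm x - Mb <= dist x (Omega i0).
    apply: dist_glb; first exact: ne.
    move=> v Hv; have := enorm_lip v x; have := HMb _ Hv; lra.
  have := Hc 0 K0; have := h_ge x i0; rewrite /Bx in ex; lra.
exists c; split => //.
rewrite /rstar; apply/eqP; rewrite eq_le; apply/andP; split.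
  by apply: (ge_inf); [exists 0 => _ [y _ <-]; exact: h_ge0 | exists c].
by apply: lb_le_inf; [exists (h c), c | move=> _ [y _ <-]; exact: hmin].
Qed.



Lemma multipliers (R : realType) (d n : nat) (u : 'I_n -> 'rV[R]_d) :
  (1 <= n)%N ->
  (forall t : 'rV[R]_d, \big[Num.max/0]_(i < n) enorm (u i) <=
                        \big[Num.max/0]_(i < n) enorm (u i - t)) ->
  exists lam : 'I_n -> R, [/\ (forall i, 0 <= lam i), \sum_i lam i = 1,
    (forall i, lam i != 0 -> enorm (u i) = \big[Num.max/0]_(i < n) enorm (u i))
    & \sum_i lam i *: u i = 0].
Proof.
move=> hn Hmin.
set r0 := \big[Num.max/0]_(i < n) enorm (u i) in Hmin *.
have [i0 _ Hi0] := @eq_bigmax _ _ _ 0 (Ordinal hn) xpredT (fun i => enorm (u i)) isT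
   (fun i _ => enorm_ge0 (u i)).
rewrite -/r0 in Hi0.
have r00 : 0 <= r0 by rewrite Hi0 enorm_ge0.
have ule : forall i, enorm (u i) <= r0 by move=> i; exact: le_bigmax.
pose act i := enorm (u i) == r0.
have acti0 : act i0 by rewrite /act Hi0.
pose a i : R := if act i then 1 else 0.
have a0 : forall i, 0 <= a i by move=> i; rewrite /a; case: ifP.
pose sumf := fun l : 'rV[R]_n => \sum_i l ord0 i.
have sum_lip : forall x y, `|sumf y - sumf x| <= 1 * \sum_j `|y ord0 j - x ord0 j|.
  by move=> x y; rewrite mul1r /sumf -sumrB; exact: ler_norm_sum.
pose S := [set l : 'rV[R]_n | forall i, `[(fun _ => 0) i, a i]%classic (l ord0 i)]
          `&` (sumf @^-1` [set x | x = 1]).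
have cS : compact S.
  apply: compact_closedI; first exact: (@box_compact R n (fun _ => 0) a).
  apply: preimage_closed; last exact: closed_eq.
  by move=> x _; exact: (@lip_cont R n sumf 1 sum_lip x).
pose e := \row_(i < n) ((i == i0)%:R : R).
have Se : S e.
  split.
    move=> i /=; rewrite mxE in_itv /=; apply/andP; split; first by case: (i == i0).
    by case: eqP => [->|_]; rewrite /a ?acti0 //; exact: a0.
  rewrite /sumf /= (bigD1 i0) //= big1 ?mxE ?eqxx ?addr0 //.
  by move=> i /negbTE ni; rewrite mxE ni.
pose psi := fun l : 'rV[R]_n => enorm (\sum_i l ord0 i *: u i).
pose Cu := \sum_k enorm (u k).
have psi_lip : forall x y, `|psi y - psi x| <= Cu * \sum_j `|y ord0 j - x ord0 j|.
  move=> x y.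
  have E1 : `|psi y - psi x| <= enorm (\sum_i (y ord0 i - x ord0 i) *: u i).
    have -> : \sum_i (y ord0 i - x ord0 i) *: u i =
              \sum_i y ord0 i *: u i - \sum_i x ord0 i *: u i.
      by rewrite -sumrB; apply: eq_bigr => i _; rewrite scalerBl.
    apply: abs_le_both.
      by have := enorm_lip (\sum_i x ord0 i *: u i) (\sum_i y ord0 i *: u i).
    rewrite enormB.
    by have := enorm_lip (\sum_i y ord0 i *: u i) (\sum_i x ord0 i *: u i).
  apply: le_trans E1 _; apply: le_trans (enorm_sum _) _.
  rewrite mulr_sumr; apply: ler_sum => i _; rewrite enormZ mulrC ler_wpM2r //.
  rewrite /Cu (bigD1 i) //= lerDl; apply: sumr_ge0 => *; exact: enorm_ge0.
have [lam Slam Hlam] := @argmin R n S psi Cu (ex_intro _ e Se) cS psi_lip.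
case: Slam => Blam Slam1.
have lam0 : forall i, 0 <= lam ord0 i.
  by move=> i; have := Blam i; rewrite /= in_itv /= => /andP[].
have lama : forall i, lam ord0 i <= a i.
  by move=> i; have := Blam i; rewrite /= in_itv /= => /andP[].
set z := \sum_i lam ord0 i *: u i.
have zz0 : dotv z z = 0.
  apply/eqP; rewrite eq_le dotvv_ge0 andbT leNgt; apply/negP => zpos.
  (* (a) first-order condition at active vertices *)
  have foc : forall j, act j -> dotv z z <= dotv z (u j).
    move=> j actj.
    suff : 0 <= 2 * dotv z (u j - z) by rewrite dotvBr; lra.
    apply: (small_t (dotvv_ge0 (u j - z))) => t t0 t1.
    pose l := \row_(i < n) ((1 - t) * lam ord0 i + t * (i == j)%:R).
    have Sl : S l.
      split.
        move=> i /=; rewrite mxE in_itv /=; apply/andP; split.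
          have h4 : 0 <= (i == j)%:R :> R by case: (i == j).
          have h5 := lam0 i.
          by apply: addr_ge0; apply: mulr_ge0; lra.
        have ei : (i == j)%:R <= a i :> R.
          by case: eqP => [->|_]; rewrite /a ?actj //; exact: a0.
        have := lama i; have := lam0 i; have : 0 <= (i == j)%:R :> R by case: (i == j).
        move=> h1 h2 h3.
        have : (1 - t) * lam ord0 i <= (1 - t) * a i by rewrite ler_wpM2l //; lra.
        have : t * (i == j)%:R <= t * a i by rewrite ler_wpM2l //; lra.
        lra.
      rewrite /sumf /=.
      under eq_bigr do rewrite mxE.
      rewrite big_split /= -mulr_sumr -mulr_sumr.
      have Ej : \sum_(i < n) ((i == j)%:R : R) = 1.
        by rewrite (bigD1 j) //= eqxx big1 ?addr0 // => i /negbTE ->.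
      rewrite Ej.
      by move: Slam1; rewrite /sumf /= => ->; lra.
    have := Hlam l Sl; rewrite /psi -/z.
    have -> : \sum_i l ord0 i *: u i = z + t *: (u j - z).
      under eq_bigr do rewrite mxE scalerDl -scalerA -scalerA.
      rewrite big_split /= -scaler_sumr -scaler_sumr -/z.
      have Ej : \sum_(i < n) (i == j)%:R *: u i = u j.
        rewrite (bigD1 j) //= eqxx scale1r big1 ?addr0 //.
        by move=> i /negbTE ->; rewrite scale0r.
      rewrite Ej.
      by apply/rowP => k; rewrite !mxE; ring.
    move=> hle.
    have := le_sq (enorm_ge0 _) hle; rewrite expand_sq enorm_sq.
    lra.
  pose Z := enorm z.
  have Z0 : 0 <= Z := enorm_ge0 z.
  have ZZ : dotv z z = Z ^+ 2 by rewrite /Z enorm_sq.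
  pose D := 2 * Z * r0 + Z * Z + 1.
  have D0 : 0 < D.
    rewrite /D; have : 0 <= Z * r0 by apply: mulr_ge0.
    nra.
  pose t := Num.min 1 (\big[Num.min/1]_(i | ~~ act i) ((r0 ^+ 2 - enorm (u i) ^+ 2) / D)).
  have t0 : 0 < t.
    rewrite /t lt_min ltr01 /=; apply: lt_bigmin => // i nact.
    apply: divr_gt0 => //.
    have ei : enorm (u i) < r0 by rewrite lt_neqAle nact ule.
    have := enorm_ge0 (u i); nra.
  have t1 : t <= 1 by rewrite /t ge_min lexx.
  have tle : forall i, ~~ act i -> t * D <= r0 ^+ 2 - enorm (u i) ^+ 2.
    move=> i nact; rewrite -ler_pdivlMr //.
    rewrite /t ge_min; apply/orP; right.
    exact: bigmin_le_cond.
  have small : forall i, enorm (u i - t *: z) < r0.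
    move=> i.
    have hsq : enorm (u i - t *: z) ^+ 2 < r0 ^+ 2.
      rewrite -scaleNr expand_sq -enorm_sq sqrrN (dotvC (u i)).
      have tzz : t ^+ 2 * dotv z z <= t * dotv z z.
        by rewrite expr2 -mulrA ler_piMl // mulr_ge0 // ?dotvv_ge0; lra.
      have [actI|nact] := boolP (act i).
        have := foc i actI; move/eqP: actI => -> hf.
        have : 0 < t * dotv z z by rewrite mulr_gt0.
        nra.
      have cs : - (enorm (u i) * Z) <= dotv z (u i).
        have := CS (- u i) z; rewrite dotvNl enormN (dotvC (u i)) -/Z; lra.
      have e0 := enorm_ge0 (u i).
      have := tle i nact; have := ule i.
      have : t * (enorm (u i) * Z) <= t * (r0 * Z).
        by rewrite ler_wpM2l ?ler_wpM2r //; lra.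
      rewrite ZZ in tzz *; rewrite /D; nra.
    by apply: sq_lt => //; exact: enorm_ge0.
  have r0pos : 0 < r0 by apply: le_lt_trans (small i0); exact: enorm_ge0.
  have := Hmin (t *: z).
  have : \big[Num.max/0]_(i < n) enorm (u i - t *: z) < r0.
    by apply: bigmax_lt => // i _; exact: small.
  lra.
exists (fun i => lam ord0 i); split => //.
- move=> i lni; apply/eqP; move: (lama i); rewrite /a; case: ifP => // _.
  by move=> h; move: lni; rewrite eq_le h lam0.
- exact: dotvv0.
Qed.



Lemma exists_ne (R : realType) (d n : nat) (Omega : 'I_n -> set 'rV[R]_d) :
  (1 <= n)%N ->
  (forall i, Omega i !=set0) ->
  (forall i, compact (Omega i)) ->
  (forall i, convex.convex_set (Omega i : set (convex_lmodType 'rV[R]_d))) ->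
  exists p q, nash_eq (gameX Omega `*` gameV Omega) (@gameY R d n)
                 (@payoff R d n) p q /\ payoff p q = rstar Omega.
Proof.
move=> hn ne cpt cvx.
have [c [rE cmin]] := min_center hn ne cpt.
have : forall i, exists v, Omega i v /\ forall w, Omega i w -> enorm (c - v) <= enorm (c - w).
  by move=> i; have [v Hv Hm] := proj_ex c (ne i) (cpt i); exists v.
move/fin_all_exists => [v Hv].
pose u i := c - v i.
have dE : forall i, dist c (Omega i) = enorm (u i).
  by move=> i; apply: proj_dist; [exact: (Hv i).1 | exact: (Hv i).2].
have hE : \big[Num.max/0]_(i < n) dist c (Omega i) = \big[Num.max/0]_(i < n) enorm (u i).
  by apply: eq_bigr => i _; exact: dE.
rewrite hE in rE cmin.
set r0 := \big[Num.max/0]_(i < n) enorm (u i) in rE cmin.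
have Hmin : forall t, r0 <= \big[Num.max/0]_(i < n) enorm (u i - t).
  move=> t; apply: le_trans (cmin (c - t)) _.
  apply: bigmax_le; first by apply: le_trans (le_bigmax _ _ (Ordinal hn)); exact: enorm_ge0.
  move=> i _; apply: le_trans (dist_le _ (Hv i).1) _.
  have -> : c - t - v i = u i - t by rewrite /u addrAC.
  exact: le_bigmax.
have [lam [l0 l1 lact lz]] := multipliers hn Hmin.
rewrite -/r0 in lact.
have r00 : 0 <= r0 by apply: le_trans (le_bigmax _ _ (Ordinal hn)); exact: enorm_ge0.
have ule : forall i, enorm (u i) <= r0 by move=> i; exact: le_bigmax.
have cE : c = \sum_i lam i *: v i.
  have : \sum_i lam i *: u i = c - \sum_i lam i *: v i.
    rewrite /u; under eq_bigr do rewrite scalerBr.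
    by rewrite sumrB -scaler_suml l1 scale1r.
  by rewrite lz => /eqP; rewrite eq_sym subr_eq0 => /eqP.
pose p := (c, v).
pose q := (fun i => (lam i / r0) *: u i, lam).
have val : payoff p q = r0.
  rewrite /payoff /=.
  have -> : \sum_(i < n) dotv (c - v i) ((lam i / r0) *: u i) = \sum_(i < n) lam i * r0.
    apply: eq_bigr => i _; rewrite dotvZr; change (c - v i) with (u i); rewrite -enorm_sq.
    have [->|ln0] := eqVneq (lam i) 0; first by rewrite !mul0r.
    rewrite (lact i ln0).
    have [->|rn0] := eqVneq r0 0; first by rewrite expr2 !mulr0.
    by field.
  by rewrite -mulr_suml l1 mul1r.
exists p, q; split; last by rewrite val rE.
split.
- split; last by move=> i; exact: (Hv i).1.
  rewrite /= cE => C cC sub; apply: conv_comb => // i.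
  by apply: sub; exists i => //; exact: (Hv i).1.
- split => //= i.
  rewrite enormZ ger0_norm ?divr_ge0 //.
  have [->|rn0] := eqVneq r0 0; first by rewrite invr0 mulr0 mul0r.
  have r0p : 0 < r0 by rewrite lt_def rn0.
  apply: le_trans (_ : lam i / r0 * r0 <= _).
    by rewrite ler_wpM2l ?divr_ge0.
  by rewrite divfK.
- case=> x' v' [_ Hv'] /=.
  rewrite -subr_ge0 /payoff -sumrB.
  have -> : \sum_(i < n) (dotv (x' - v' i) (q.1 i) - dotv (p.1 - p.2 i) (q.1 i)) =
      dotv (x' - c) (\sum_i q.1 i) + \sum_(i < n) dotv (v i - v' i) (q.1 i).
    rewrite dotv_sumr -big_split /=; apply: eq_bigr => i _.
    rewrite -dotvBl -dotvDl; congr dotv.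
    by apply/rowP => k; rewrite !mxE; ring.
  have -> : \sum_i q.1 i = r0^-1 *: \sum_i lam i *: u i.
    by rewrite scaler_sumr; apply: eq_bigr => i _; rewrite /q /= scalerA mulrC.
  rewrite lz scaler0.
  rewrite dotv0r add0r; apply: sumr_ge0 => i _ /=.
  rewrite dotvZr; apply: mulr_ge0; first by rewrite divr_ge0.
  have := proj_vi (cvx i) (Hv i).1 (Hv' i) (Hv i).2.
  change (c - v i) with (u i); rewrite dotvC -[v i - v' i]opprB dotvNl; lra.
- case=> y s [Hys Hs] /=; rewrite val /payoff /=.
  apply: le_trans (_ : \sum_(i < n) r0 * s i <= _); last by rewrite -mulr_sumr Hs mulr1.
  apply: ler_sum => i _; apply: le_trans (CS _ _) _.
  by apply: ler_pM; [exact: enorm_ge0 | exact: enorm_ge0 | exact: ule | exact: Hys].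
Qed.

Unset Implicit Arguments. Set Strict Implicit. Set Printing Implicit Defensive.

Theorem theorem1 (R : realType) (d n : nat) (Omega : 'I_n -> set 'rV[R]_d) :
  (1 <= n)%N -> (1 <= d)%N ->
  (forall i, Omega i !=set0) ->
  (forall i, compact (Omega i)) ->
  (forall i, convex.convex_set (Omega i : set (convex_lmodType 'rV[R]_d))) ->
  (exists p q, nash_eq (gameX Omega `*` gameV Omega) (@gameY R d n)
                 (@payoff R d n) p q) /\
  (forall p q, nash_eq (gameX Omega `*` gameV Omega) (@gameY R d n)
                 (@payoff R d n) p q ->
     [/\ payoff p q = rstar Omega,
         (forall i, cball p.1 (rstar Omega) `&` Omega i !=set0)
       & (forall i, (cball p.1 (rstar Omega) `&` Omega i) (p.2 i))]).
Proof.
move=> hn hd ne cpt cvx.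
have [p0 [q0 [NE0 val0]]] := exists_ne hn ne cpt cvx.
split; first by exists p0, q0.
move=> p q NE.
case: NE0 => P0 Q0 A0 B0; case: NE => P Q A B.
have vE : payoff p q = rstar Omega.
  have h1 := A p0 P0; have h2 := B0 q Q; have h3 := A0 p P; have h4 := B q0 Q0.
  lra.
have key : forall i, enorm (p.1 - p.2 i) <= payoff p q.
  move=> i; set w := p.1 - p.2 i; set e := enorm w.
  pose q' := (fun j => if j == i then e^-1 *: w else 0,
              fun j => if j == i then 1 else 0 : R).
  have Yq' : gameY q'.
    split.
      move=> j /=; case: eqP => _; last by rewrite enorm0.
      rewrite enormZ ger0_norm ?invr_ge0 ?enorm_ge0 // -/e.
      by have [->|en] := eqVneq e 0; [rewrite mulr0 | rewrite mulVf].
    by rewrite /= (bigD1 i) //= eqxx big1 ?addr0 // => j /negbTE ->.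
  have := B q' Yq'.
  have -> : payoff p q' = e; last by [].
  rewrite /payoff (bigD1 i) //= eqxx big1 ?addr0; last first.
    by move=> j /negbTE ->; rewrite dotv0r.
  rewrite dotvZr -/w -enorm_sq -/e.
  have [->|en] := eqVneq e 0; first by rewrite invr0 mul0r.
  by rewrite expr2 mulKf.
split => //.
- by move=> i; exists (p.2 i); split; [rewrite /cball /= enormB -vE; exact: key | exact: P.2].
- by move=> i; split; [rewrite /cball /= enormB -vE; exact: key | exact: P.2].
Qed.
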